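(* Let $\Gamma$ be a discrete group. The global $L^2$-character map induces a map $\operatorname{ch}^\Gamma\otimes_{\mathbb Z}\mathbb Q:A(\Gamma)\otimes_{\mathbb Z}\mathbb Q\to\prod_{(K)}\mathbb Q$ which is injective. If $\Gamma$ has only finitely many conjugacy classes of finite subgroups, it is bijective.
   Context: The Burnside group $A(\Gamma)$ is the Grothendieck group of the monoid (under disjoint union) of isomorphism classes of proper cocompact $\Gamma$-sets (all isotropy groups finite, finitely many orbits); it is free abelian on $[\Gamma/H]$, $H$ running over conjugacy classes of finite subgroups. For a finite subgroup $K$, with $WK=N_\Gamma K/K$, $\operatorname{ch}^\Gamma_K:A(\Gamma)\to\mathbb Q$ sends $[S]$ to $\sum_{i=1}^r|L_i|^{-1}$, where $WK/L_1,\dots,WK/L_r$ are the $WK$-orbits of $S^K$. The global $L^2$-character map is $\operatorname{ch}^\Gamma=\prod_{(K)}\operatorname{ch}^\Gamma_K:A(\Gamma)\to\prod_{(K)}\mathbb Q$, $(K)$ ranging over conjugacy classes of finite subgroups of $\Gamma$. *)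

(* Defs.v *)
From HB Require Import structures.
From mathcomp Require Import all_boot all_order all_algebra.
From mathcomp Require Import finmap.
From mathcomp Require Import boolp classical_sets functions cardinality fsbigop.
Set Implicit Arguments. Unset Strict Implicit. Unset Printing Implicit Defensive.
Import Order.TTheory GRing.Theory Num.Theory.
Local Open Scope classical_set_scope.
Local Open Scope ring_scope.

Record group := Group {
  gcar :> Type;
  gmul : gcar -> gcar -> gcar;
  ginv : gcar -> gcar;
  gone : gcar;
  gmulA : forall x y z, gmul x (gmul y z) = gmul (gmul x y) z;
  gmul1x : forall x, gmul gone x = x;
  gmulx1 : forall x, gmul x gone = x;
  gmulVx : forall x, gmul (ginv x) x = gone;
  gmulxV : forall x, gmul x (ginv x) = gone }.

Section Groups.
Variable G : group.
Local Notation "x * y" := (gmul x y).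
Local Notation "x ^-1" := (ginv x).
Local Notation "1" := (@gone G).

Definition is_subgroup (K : set G) : Prop :=
  K 1 /\ (forall x y, K x -> K y -> K (x * y)) /\ (forall x, K x -> K (x ^-1)).

Definition fin_subgroup (K : set G) : Prop := is_subgroup K /\ finite_set K.

Definition conjs (g : G) (K : set G) : set G := [set g * k * g ^-1 | k in K].

Definition normalizer (K : set G) : set G := [set g | conjs g K = K].

(** left coset g K (an element of the Weyl group W K = N K / K when g in N K) *)
Definition lcoset (g : G) (K : set G) : set G := [set g * k | k in K].

Definition conj_class_of (K : set G) : set (set G) := [set conjs g K | g in setT].

Definition is_conj_class (C : set (set G)) : Prop :=
  exists2 K, fin_subgroup K & C = conj_class_of K.

Definition class_rep (C : set (set G)) : set G := xget set0 C.

Record gset := GSet {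
  gs_car :> Type;
  gact : G -> gs_car -> gs_car;
  gact1 : forall s, gact 1 s = s;
  gactM : forall g h s, gact (g * h) s = gact g (gact h s) }.

Definition stab (S : gset) (s : S) : set G := [set g | gact g s = s].
Definition orbit (S : gset) (s : S) : set S := [set gact g s | g in setT].

Definition proper_gset (S : gset) : Prop := forall s : S, finite_set (stab s).
Definition cocompact_gset (S : gset) : Prop :=
  finite_set [set O : set S | exists s, O = orbit s].

Definition gset_iso (S T : gset) : Prop :=
  exists (f : S -> T) (f' : T -> S),
    cancel f f' /\ cancel f' f /\ forall g s, f (gact g s) = gact g (f s).

Definition gsum (S T : gset) : gset.
refine (@GSet (S + T)%type
  (fun g x => match x with inl s => inl (gact g s) | inr t => inr (gact g t) end) _ _).
- by case=> s; rewrite gact1.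
- by move=> g h [s|t]; rewrite gactM.
Defined.

Definition gscale (n : nat) (S : gset) : gset.
refine (@GSet (S * 'I_n)%type (fun g x => (gact g x.1, x.2)) _ _).
- by case=> s i; rewrite gact1.
- by move=> g h [s i]; rewrite gactM.
Defined.

Definition fixpts (S : gset) (K : set G) : set S :=
  [set s | forall k, K k -> gact k s = s].

Arguments fixpts : clear implicits.

(** W K-orbit of s in S^K (W K = N K / K acts through N K) *)
Definition W_orbit (S : gset) (K : set G) (s : S) : set S :=
  [set gact g s | g in normalizer K].

Definition W_orbits (S : gset) (K : set G) : set (set S) :=
  [set O | exists2 s : S, fixpts S K s & O = W_orbit K s].

Arguments W_orbits : clear implicits.

Definition W_isotropy (S : gset) (K : set G) (s : S) : set (set G) :=
  [set lcoset g K | g in normalizer K `&` stab s].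

Definition W_isotropy_order (S : gset) (K : set G) (s : S) : nat :=
  #|` fset_set (W_isotropy K s)|%fset.

(** 1/|L| for the orbit WK/L = O (L = isotropy of a chosen point of O) *)
Definition orbit_weight (S : gset) (K : set G) (O : set S) : rat :=
  xget 0 [set q : rat | exists2 s, O s & q = GRing.inv ((W_isotropy_order K s)%:R : rat)].

Definition chK (K : set G) (S : gset) : rat :=
  \sum_(O \in W_orbits S K) orbit_weight K O.

Record pcgset := PCGSet {
  pc_set :> gset;
  pc_proper : proper_gset pc_set;
  pc_cocompact : cocompact_gset pc_set }.

(** Elements of A(Gamma) (x) Q, written ([P] - [N]) (x) 1/(d+1).
    (A(Gamma) is the Grothendieck group of the monoid of iso classes of
    proper cocompact Gamma-sets; A (x)_Z Q is its localization at nonzero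
    integers.) *)
Record AQ := MkAQ { aq_pos : pcgset; aq_neg : pcgset; aq_den : nat }.

(** Equality in A(Gamma) (x) Q:  x/n = y/m  iff  k (m x - n y) = 0 in A(Gamma)
    for some k > 0, and  [P]-[N] = 0 in the Grothendieck group iff
    P + U ~= N + U for some U in the monoid. *)
Definition AQ_eq (a b : AQ) : Prop :=
  let na := (aq_den a).+1 in let nb := (aq_den b).+1 in
  exists2 k : nat, (0 < k)%N &
  exists U : pcgset,
    gset_iso
      (gsum (gsum (gscale (k * nb) (aq_pos a)) (gscale (k * na) (aq_neg b))) U)
      (gsum (gsum (gscale (k * nb) (aq_neg a)) (gscale (k * na) (aq_pos b))) U).

Definition chQ_K (K : set G) (a : AQ) : rat :=
  (chK K (aq_pos a) - chK K (aq_neg a)) / ((aq_den a).+1)%:R.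

Definition chQ (a : AQ) (C : set (set G)) : rat := chQ_K (class_rep C) a.

End Groups.

(* Main.v *)
Require Import Defs.
From HB Require Import structures.
From mathcomp Require Import all_boot all_order all_algebra.
From mathcomp Require Import finmap.
From mathcomp Require Import boolp classical_sets functions cardinality fsbigop.
From mathcomp Require Import ring lra.
Set Implicit Arguments. Unset Strict Implicit. Unset Printing Implicit Defensive.
Import Order.TTheory GRing.Theory Num.Theory.
Local Open Scope classical_set_scope.

Section GroupFacts.
Variable G : group.
Local Notation "x ⋆ y" := (@gmul G x y) (at level 40, left associativity).
Local Notation gi := (@ginv G).
Local Notation e := (@gone G).

Lemma mulKg (g x : G) : gi g ⋆ (g ⋆ x) = x.
Proof. by rewrite gmulA gmulVx gmul1x. Qed.
Lemma mulKVg (g x : G) : g ⋆ (gi g ⋆ x) = x.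
Proof. by rewrite gmulA gmulxV gmul1x. Qed.
Lemma mulgK (g x : G) : x ⋆ g ⋆ gi g = x.
Proof. by rewrite -gmulA gmulxV gmulx1. Qed.
Lemma mulgKV (g x : G) : x ⋆ gi g ⋆ g = x.
Proof. by rewrite -gmulA gmulVx gmulx1. Qed.
Lemma mulgI (g x y : G) : g ⋆ x = g ⋆ y -> x = y.
Proof. by move=> h; rewrite -(mulKg g x) h mulKg. Qed.
Lemma mulIg (g x y : G) : x ⋆ g = y ⋆ g -> x = y.
Proof. by move=> h; rewrite -(mulgK g x) h mulgK. Qed.
Lemma invK (x : G) : gi (gi x) = x.
Proof. by apply: (@mulgI (gi x)); rewrite gmulxV gmulVx. Qed.
Lemma invM (x y : G) : gi (x ⋆ y) = gi y ⋆ gi x.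
Proof. by apply: (@mulgI (x ⋆ y)); rewrite gmulxV -gmulA mulKVg gmulxV. Qed.
Lemma inv1 : gi e = e.
Proof. by rewrite -{2}(gmulVx e) gmulx1. Qed.

Lemma conjsM g h (K : set G) : conjs g (conjs h K) = conjs (g ⋆ h) K.
Proof.
rewrite /conjs; apply/seteqP; split=> x /=.
  by case=> y [k Kk <-] <-; exists k => //; rewrite invM !gmulA.
case=> k Kk <-; exists (h ⋆ k ⋆ gi h); first by exists k.
by rewrite invM !gmulA.
Qed.
Lemma conjs1 (K : set G) : conjs e K = K.
Proof.
rewrite /conjs; apply/seteqP; split=> x /=.
  by case=> k Kk <-; rewrite inv1 gmulx1 gmul1x.
by move=> Kx; exists x => //; rewrite inv1 gmulx1 gmul1x.
Qed.
Lemma conjsK g (K : set G) : conjs (gi g) (conjs g K) = K.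
Proof. by rewrite conjsM gmulVx conjs1. Qed.
Lemma conjsKV g (K : set G) : conjs g (conjs (gi g) K) = K.
Proof. by rewrite conjsM gmulxV conjs1. Qed.
Lemma conjs_inj (g : G) : injective (conjs g).
Proof. by move=> A B h; rewrite -(conjsK g A) h conjsK. Qed.
Lemma conjsS g (A B : set G) : A `<=` B -> conjs g A `<=` conjs g B.
Proof. by move=> AB x [k Ak <-]; exists k => //; apply: AB. Qed.

Lemma normalizer_mul g h (K : set G) :
  normalizer K g -> normalizer K h -> normalizer K (g ⋆ h).
Proof. by rewrite /normalizer /= => Hg Hh; rewrite -conjsM Hh Hg. Qed.
Lemma normalizer_inv g (K : set G) : normalizer K g -> normalizer K (gi g).
Proof. by rewrite /normalizer /= => Hg; rewrite -{1}Hg conjsK. Qed.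
Lemma normalizer1 (K : set G) : normalizer K e.
Proof. exact: conjs1. Qed.

Lemma conj_class_conjs g (K : set G) : conj_class_of (conjs g K) = conj_class_of K.
Proof.
rewrite /conj_class_of; apply/seteqP; split=> A /=.
  by case=> h _ <-; exists (h ⋆ g) => //; rewrite conjsM.
case=> h _ <-; exists (h ⋆ gi g) => //; by rewrite conjsM mulgKV.
Qed.

End GroupFacts.


Definition sz (T : choiceType) (A : set T) : nat := #|` fset_set A|%fset.

Lemma sz_image (T U : choiceType) (f : T -> U) (A : set T) :
  finite_set A -> {in A &, injective f} -> sz (f @` A) = sz A.
Proof.
move=> fA fi; rewrite /sz fset_set_image //.
apply/eqP/card_in_imfsetP => x y; rewrite !in_fset_set // => xA yA.
by apply: fi.
Qed.

Lemma sz_sub (T : choiceType) (A B : set T) :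
  finite_set B -> A `<=` B -> (sz A <= sz B)%N.
Proof.
move=> fB AB; have fA := sub_finite_set AB fB.
by apply: fsubset_leq_card; rewrite -fset_set_sub.
Qed.

Lemma sz_sub_eq (T : choiceType) (A B : set T) :
  finite_set B -> A `<=` B -> (sz B <= sz A)%N -> A = B.
Proof.
move=> fB AB le; have fA := sub_finite_set AB fB.
apply: fset_set_inj => //; apply/eqP; rewrite eqEfcard le andbT.
by rewrite -fset_set_sub.
Qed.

Lemma sz_gt0 (T : choiceType) (A : set T) x : finite_set A -> A x -> (0 < sz A)%N.
Proof.
move=> fA Ax; rewrite /sz cardfs_gt0; apply/fset0Pn; exists x.
by rewrite in_fset_set // inE.
Qed.

Lemma sz_set0 (T : choiceType) : sz (@set0 T) = 0%N.
Proof. by rewrite /sz fset_set0. Qed.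

Section GSetFacts.
Variable G : group.
Local Notation "x ⋆ y" := (@gmul G x y) (at level 40, left associativity).
Local Notation gi := (@ginv G).
Local Notation e := (@gone G).
Definition gsz (A : set G) : nat := @sz {classic G} A.

Lemma gsz_conjs g (K : set G) : finite_set K -> gsz (conjs g K) = gsz K.
Proof.
move=> fK; rewrite /gsz /conjs.
apply: (@sz_image {classic G} {classic G} (fun k => g ⋆ k ⋆ gi g)) => // x y _ _.
by move/mulIg/mulgI.
Qed.
Lemma finite_conjs g (K : set G) : finite_set K -> finite_set (conjs g K).
Proof. by move=> fK; apply: finite_image. Qed.

Variable S : gset G.
Lemma gactK g (s : S) : gact (gi g) (gact g s) = s.
Proof. by rewrite -gactM gmulVx gact1. Qed.
Lemma gactKV g (s : S) : gact g (gact (gi g) s) = s.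
Proof. by rewrite -gactM gmulxV gact1. Qed.
Lemma gact_inj g : injective (@gact G S g).
Proof. by move=> s t h; rewrite -(gactK g s) h gactK. Qed.

Lemma stab_act g (s : S) : stab (gact g s) = conjs g (stab s).
Proof.
rewrite /stab /conjs; apply/seteqP; split=> h /=.
  move=> hs; exists (gi g ⋆ h ⋆ g); last by rewrite !gmulA gmulxV gmul1x mulgK.
  by rewrite !gactM hs gactK.
by case=> k ks <-; rewrite !gactM gactK ks.
Qed.

Lemma stab_subgroup (s : S) : is_subgroup (stab s).
Proof.
split; first exact: gact1.
split; first by move=> x y /= hx hy; rewrite /stab /= gactM hy hx.
by move=> x /= hx; rewrite /stab /= -{1}hx gactK.
Qed.

Lemma orbit_act g (s : S) : Defs.orbit (gact g s) = Defs.orbit s.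
Proof.
rewrite /Defs.orbit; apply/seteqP; split=> t /=.
  by case=> h _ <-; exists (h ⋆ g) => //; rewrite gactM.
by case=> h _ <-; exists (h ⋆ gi g) => //; rewrite gactM gactK.
Qed.

Lemma orbit_sym (s t : S) : Defs.orbit s t -> Defs.orbit t = Defs.orbit s.
Proof. by case=> g _ <-; rewrite orbit_act. Qed.

Lemma W_orbit_act (K : set G) n (s : S) :
  normalizer K n -> W_orbit K (gact n s) = W_orbit K s.
Proof.
move=> Nn; rewrite /W_orbit; apply/seteqP; split=> t /=.
  by case=> h Nh <-; exists (h ⋆ n); [exact: normalizer_mul|rewrite gactM].
case=> h Nh <-; exists (h ⋆ gi n); last by rewrite gactM gactK.
by apply: normalizer_mul => //; apply: normalizer_inv.
Qed.

Lemma finite_subsets (T : choiceType) (A : set T) :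
  finite_set A -> finite_set [set Q | Q `<=` A].
Proof.
move=> fA.
apply: (@sub_finite_set _ _ ((fun F : {fset T} => [set` F]) @` [set` fpowerset (fset_set A)])).
  move=> Q /= QA; have fQ := sub_finite_set QA fA.
  exists (fset_set Q); last exact: fset_setK.
  by rewrite /= fpowersetE -fset_set_sub.
by apply: finite_image; apply: finite_fset.
Qed.

Lemma fixpts_stab (K : set G) (s : S) : @fixpts G S K s <-> K `<=` stab s.
Proof. by []. Qed.

Lemma finite_T (K : set G) (s0 : S) : finite_set (stab s0) ->
  finite_set [set W_orbit K s | s in Defs.orbit s0 `&` @fixpts G S K].
Proof.
move=> fs0.
pose Phi (Q : set G) := xget set0 [set W : set S | exists g, conjs (gi g) K = Q /\ W = W_orbit K (gact g s0)].
apply: (@sub_finite_set _ _ (Phi @` [set Q | Q `<=` stab s0])); last first.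
  by apply: finite_image; exact: (@finite_subsets {classic G} (stab s0) fs0).
move=> W [s [[g _ <-] fx] <-]; exists (conjs (gi g) K).
  have fx' : K `<=` stab (gact g s0) := fx.
  by have := @conjsS _ (gi g) _ _ fx'; rewrite stab_act conjsK.
apply: xget_unique; first by exists g.
move=> W' [h [eqh ->]].
have Nn : normalizer K (h ⋆ gi g).
  by rewrite /normalizer /= -conjsM -eqh conjsKV.
have -> : gact h s0 = gact (h ⋆ gi g) (gact g s0) by rewrite -gactM mulgKV.
exact: W_orbit_act.
Qed.

Lemma finite_W_orbits (K : set G) :
  proper_gset S -> cocompact_gset S -> finite_set (@W_orbits G S K).
Proof.
move=> pS cS.
pose F (O : set S) := [set W | exists2 s0, O = Defs.orbit s0 &
   [set W_orbit K s | s in Defs.orbit s0 `&` @fixpts G S K] W].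
apply: (@sub_finite_set _ _ (\bigcup_(O in [set O : set S | exists s, O = Defs.orbit s]) F O)).
  move=> W [s fs ->]; exists (Defs.orbit s); first by exists s.
  exists s => //; exists s => //; split => //; exists e => //; exact: gact1.
apply: bigcup_finite => // O [s0 ->].
apply: (@sub_finite_set _ _ [set W_orbit K s | s in Defs.orbit s0 `&` @fixpts G S K]);
  last exact: finite_T.
by move=> W [s1 e1 HW]; rewrite -e1 in HW.
Qed.
End GSetFacts.

Section Equivariant.
Variable G : group.
Local Notation "x ⋆ y" := (@gmul G x y) (at level 40, left associativity).
Local Notation gi := (@ginv G).
Local Notation e := (@gone G).
Variables (S X : gset G) (i : S -> X).
Hypothesis i_eq : forall g s, i (gact g s) = gact g (i s).
Hypothesis i_inj : injective i.

Lemma stab_image s : stab (i s) = stab s.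
Proof.
rewrite /stab; apply/seteqP; split=> g /=; last by rewrite -i_eq => ->.
by rewrite -i_eq => /i_inj.
Qed.

Lemma fix_image K s : @fixpts G X K (i s) <-> @fixpts G S K s.
Proof.
rewrite /fixpts; split => h k Kk; move: (h k Kk); first by rewrite -i_eq => /i_inj.
by rewrite -i_eq => ->.
Qed.

Lemma Wo_image K s : W_orbit K (i s) = i @` W_orbit K s.
Proof.
rewrite /W_orbit; apply/seteqP; split=> y /=.
  by case=> g Ng <-; exists (gact g s); [exists g|rewrite i_eq].
by case=> _ [g Ng <-] <-; exists g => //; rewrite i_eq.
Qed.

Lemma ord_image K s : W_isotropy_order K (i s) = W_isotropy_order K s.
Proof. by rewrite /W_isotropy_order /W_isotropy stab_image. Qed.

Lemma ow_image K (O : set S) : orbit_weight K (i @` O) = orbit_weight K O.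
Proof.
rewrite /orbit_weight; congr xget; apply/seteqP; split=> q /=.
  by case=> _ [s Os <-] ->; exists s => //; rewrite ord_image.
by case=> s Os ->; exists (i s); [exists s|rewrite ord_image].
Qed.

Lemma image_inj_set : injective (fun O : set S => i @` O).
Proof.
move=> A B h; apply/seteqP; split=> x Ax.
  have : (i @` B) (i x) by rewrite -h; exists x.
  by rewrite image_inj.
have : (i @` A) (i x) by rewrite h; exists x.
by rewrite image_inj.
Qed.

Lemma Wos_image K : (fun O => i @` O) @` @W_orbits G S K `<=` @W_orbits G X K.
Proof.
move=> _ [O [s fs ->] <-]; exists (i s); first by apply/fix_image.
by rewrite Wo_image.
Qed.

Lemma chK_image_sum K :
  (\sum_(O \in (fun O => i @` O) @` @W_orbits G S K) orbit_weight K O)%R = chK K S.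
Proof.
rewrite fsbig_image; last by move=> A B _ _; apply: image_inj_set.
by apply: eq_fsbigr => O _; rewrite ow_image.
Qed.
End Equivariant.

Section ChK.
Variable G : group.
Local Notation "x ⋆ y" := (@gmul G x y) (at level 40, left associativity).
Local Notation gi := (@ginv G).
Local Notation e := (@gone G).

Lemma chK_iso K (S T : gset G) : gset_iso S T -> chK K S = chK K T.
Proof.
case=> f [f' [fK [f'K feq]]].
have finj : injective f by exact: can_inj fK.
rewrite -(chK_image_sum feq finj K) [RHS]/chK; apply: eq_fsbigl.
apply/seteqP; split; first exact: Wos_image.
move=> _ [t ft ->]; exists (W_orbit K (f' t)).
  exists (f' t) => //; apply/(fix_image feq finj); by rewrite f'K.
by rewrite -Wo_image // f'K.
Qed.

Lemma W_orbit_self K (S : gset G) (s : S) : W_orbit K s s.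
Proof. by exists e; [exact: normalizer1|exact: gact1]. Qed.

Lemma W_orbits_gsum K (S T : gset G) :
  @W_orbits G (gsum S T) K =
  (fun O => inl @` O) @` @W_orbits G S K `|` (fun O => inr @` O) @` @W_orbits G T K.
Proof.
have il g (s : S) : @inl S T (gact g s) = @gact G (gsum S T) g (inl s) by [].
have ir g (t : T) : @inr S T (gact g t) = @gact G (gsum S T) g (inr t) by [].
have iil : injective (@inl S T) by move=> ? ? [].
have iir : injective (@inr S T) by move=> ? ? [].
apply/seteqP; split; last first.
  by move=> O [] => [/(@Wos_image G S (gsum S T) inl il iil K)|/(@Wos_image G T (gsum S T) inr ir iir K)].
move=> _ [[s|t] fx ->].
  left; exists (W_orbit K s); last by rewrite (@Wo_image G S (gsum S T) inl il).
  by exists s => //; apply/(@fix_image G S (gsum S T) inl il iil).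
right; exists (W_orbit K t); last by rewrite (@Wo_image G T (gsum S T) inr ir).
by exists t => //; apply/(@fix_image G T (gsum S T) inr ir iir).
Qed.

Lemma finite_W_orbits_gsum K (S T : gset G) :
  finite_set (@W_orbits G S K) -> finite_set (@W_orbits G T K) ->
  finite_set (@W_orbits G (gsum S T) K).
Proof. by move=> fS fT; rewrite W_orbits_gsum finite_setU; split; apply: finite_image. Qed.

Lemma chK_gsum K (S T : gset G) :
  finite_set (@W_orbits G S K) -> finite_set (@W_orbits G T K) ->
  chK K (gsum S T) = (chK K S + chK K T)%R.
Proof.
have il g (s : S) : @inl S T (gact g s) = @gact G (gsum S T) g (inl s) by [].
have ir g (t : T) : @inr S T (gact g t) = @gact G (gsum S T) g (inr t) by [].
have iil : injective (@inl S T) by move=> ? ? [].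
have iir : injective (@inr S T) by move=> ? ? [].
move=> fS fT; rewrite /chK W_orbits_gsum fsbigU0; first last.
- move=> X [[O [s _ EO] EX] [O' _ E]]; subst O X.
  have H1 : ((@inl S T) @` W_orbit K s) (@inl S T s).
    by exists s => //; exact: W_orbit_self.
  by rewrite -E in H1; case: H1 => x _ hx; discriminate hx.
- exact: (finite_image _ fT).
- exact: (finite_image _ fS).
by rewrite (@chK_image_sum G S (gsum S T) inl il iil) (@chK_image_sum G T (gsum S T) inr ir iir).
Qed.

Lemma finite_W_orbits_iso K (S T : gset G) : gset_iso S T ->
  finite_set (@W_orbits G S K) -> finite_set (@W_orbits G T K).
Proof.
case=> f [f' [fK [f'K feq]]] fS.
have finj : injective f by exact: can_inj fK.
apply: (sub_finite_set _ (finite_image (fun O => f @` O) fS)).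
move=> _ [t ft ->]; exists (W_orbit K (f' t)).
  exists (f' t) => //; apply/(fix_image feq finj); by rewrite f'K.
by rewrite -Wo_image // f'K.
Qed.

Lemma ow_ge0 K (S : gset G) (O : set S) : (0 <= orbit_weight K O)%R.
Proof.
rewrite /orbit_weight; case: xgetP => // q _ [s _ ->].
by rewrite invr_ge0 ler0n.
Qed.

Lemma chK_ge0 K (S : gset G) : (0 <= chK K S)%R.
Proof. by apply: fsumr_ge0 => O _; exact: ow_ge0. Qed.

Lemma chK_nofix K (S : gset G) : (forall s : S, ~ @fixpts G S K s) -> chK K S = 0%R.
Proof.
move=> nf; rewrite /chK; apply: fsbig1 => O [s fs _].
by case: (nf s).
Qed.

Local Open Scope ring_scope.
Lemma fix_norm K (S : gset G) (s : S) n :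
  @fixpts G S K s -> normalizer K n -> @fixpts G S K (gact n s).
Proof.
move=> fs Nn k Kk.
have : conjs n K k by rewrite Nn.
case=> k' Kk' <-; by rewrite gactM gactK gactM (fs k' Kk').
Qed.

Lemma ord_gt0 K (S : gset G) (s : S) :
  finite_set (stab s) -> @fixpts G S K s -> (0 < W_isotropy_order K s)%N.
Proof.
move=> fs fx; rewrite /W_isotropy_order.
apply: (@sz_gt0 _ _ (lcoset e K)).
  apply: finite_image; apply: (sub_finite_set _ fs); by move=> x [].
exists e => //; split; [exact: normalizer1|exact: gact1].
Qed.

Lemma ow_gt0 K (S : gset G) (s : S) : proper_gset S -> @fixpts G S K s ->
  (0 < orbit_weight K (W_orbit K s))%R.
Proof.
move=> pS fx; rewrite /orbit_weight.
case: xgetP => [q' _ [s1 [m Nm <-] ->]|hN]; last first.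
  case: (hN (W_isotropy_order K s)%:R^-1); exists s => //; exact: W_orbit_self.
rewrite invr_gt0 ltr0n; apply: ord_gt0; first exact: pS.
exact: fix_norm.
Qed.

Lemma chK_gt0 K (S : gset G) (s : S) : proper_gset S ->
  finite_set (@W_orbits G S K) -> @fixpts G S K s -> (0 < chK K S)%R.
Proof.
move=> pS fS fx; rewrite /chK (fsbigD1 (W_orbit K s)) //; last by exists s.
apply: (@Order.POrderTheory.lt_le_trans _ _ (orbit_weight K (W_orbit K s))).
  exact: ow_gt0.
rewrite lerDl; apply: fsumr_ge0 => O _; exact: ow_ge0.
Qed.
End ChK.



Section Iso.
Variable G : group.
Local Notation "x ⋆ y" := (@gmul G x y) (at level 40, left associativity).
Local Notation gi := (@ginv G).
Local Notation e := (@gone G).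

Lemma iso_refl (S : gset G) : gset_iso S S.
Proof. by exists id, id. Qed.
Lemma iso_sym (S T : gset G) : gset_iso S T -> gset_iso T S.
Proof.
case=> f [f' [fK [f'K feq]]]; exists f', f; split; first by [].
split; first by [].
by move=> g t; apply: (can_inj fK); rewrite feq !f'K.
Qed.
Lemma iso_trans (S T U : gset G) : gset_iso S T -> gset_iso T U -> gset_iso S U.
Proof.
case=> f [f' [fK [f'K feq]]] [h [h' [hK [h'K heq]]]].
exists (h \o f), (f' \o h'); split; [|split].
- by move=> x /=; rewrite hK fK.
- by move=> x /=; rewrite f'K h'K.
- by move=> g s /=; rewrite feq heq.
Qed.
Lemma iso_sum (S S' T T' : gset G) : gset_iso S S' -> gset_iso T T' ->
  gset_iso (gsum S T) (gsum S' T').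
Proof.
case=> f [f' [fK [f'K feq]]] [h [h' [hK [h'K heq]]]].
exists (fun x => match x with inl s => inl (f s) | inr t => inr (h t) end).
exists (fun x => match x with inl s => inl (f' s) | inr t => inr (h' t) end).
split; [|split].
- by case=> x /=; rewrite ?fK ?hK.
- by case=> x /=; rewrite ?f'K ?h'K.
- by move=> g [s|t] /=; rewrite ?feq ?heq.
Qed.
Lemma iso_sumC (S T : gset G) : gset_iso (gsum S T) (gsum T S).
Proof.
exists (fun x => match x with inl s => inr s | inr t => inl t end).
exists (fun x => match x with inl s => inr s | inr t => inl t end).
by split; [case|split; [case|move=> g []]].
Qed.
Lemma iso_sumA (S T U : gset G) : gset_iso (gsum (gsum S T) U) (gsum S (gsum T U)).
Proof.
exists (fun x => match x with inl (inl s) => inl s | inl (inr t) => inr (inl t)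
                 | inr u => inr (inr u) end).
exists (fun x => match x with inl s => inl (inl s) | inr (inl t) => inl (inr t)
                 | inr (inr u) => inr u end).
by split; [case=> [[]|]|split; [case=> [|[]]|move=> g [[]|]]].
Qed.

Lemma gscaleS_iso n (S : gset G) : gset_iso (gscale n.+1 S) (gsum (gscale n S) S).
Proof.
exists (fun x : S * 'I_n.+1 => match unlift ord_max x.2 with
   Some j => @inl (S * 'I_n) S (x.1, j) | None => inr x.1 end).
exists (fun x : (S * 'I_n) + S => match x with
   inl y => (y.1, lift ord_max y.2) | inr s => (s, ord_max) end).
split; [|split].
- move=> [s i] /=; case: unliftP => [j ->|->] //.
- by case=> [[s j]|s] /=; rewrite ?liftK ?unlift_none.
- by move=> g [s i] /=; case: unliftP.
Qed.

Lemma finW_gscale K n (S : gset G) : finite_set (@W_orbits G S K) ->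
  finite_set (@W_orbits G (gscale n S) K).
Proof.
move=> fS; elim: n => [|n IH].
  apply: (sub_finite_set _ (@finite_set0 (set (gscale 0 S)))).
  by move=> O [[s []]].
apply: (finite_W_orbits_iso (iso_sym (gscaleS_iso n S))).
exact: finite_W_orbits_gsum.
Qed.

Lemma chK_gscale K n (S : gset G) : finite_set (@W_orbits G S K) ->
  chK K (gscale n S) = (n%:R * chK K S)%R.
Proof.
move=> fS; elim: n => [|n IH].
  by rewrite mul0r; apply: chK_nofix => -[s []].
rewrite (chK_iso K (gscaleS_iso n S)) chK_gsum ?IH //; last exact: finW_gscale.
by rewrite -nat1r mulrDl mul1r addrC.
Qed.

Definition ginvariant (S : gset G) (P : set S) := forall g s, P s -> P (gact g s).

Definition gsub (S : gset G) (P : set S) (hP : ginvariant P) : gset G.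
refine (@GSet G {x : S | P x} (fun g x => exist _ (gact g (sval x)) (hP g _ (svalP x))) _ _).
- by case=> s p; apply: eq_exist; rewrite gact1.
- by move=> g h [s p]; apply: eq_exist; rewrite gactM.
Defined.

Lemma ginvariantC (S : gset G) (P : set S) : ginvariant P -> ginvariant (~` P).
Proof. by move=> hP g s nP Pg; apply: nP; rewrite -(gactK g s); apply: hP. Qed.

Lemma gsub_split (S : gset G) (P : set S) (hP : ginvariant P) :
  gset_iso S (gsum (gsub hP) (gsub (ginvariantC hP))).
Proof.
exists (fun x => match pselect (P x) with
  | left p => @inl (gsub hP) (gsub (ginvariantC hP)) (exist _ x p)
  | right np => inr (exist _ x np) end).
exists (fun y : (gsub hP) + (gsub (ginvariantC hP)) => match y with inl z => sval z | inr z => sval z end).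
split; [|split].
- by move=> x; case: pselect.
- case=> [[x p]|[x p]] /=; case: pselect => // q.
  + by congr inl; apply: eq_exist.
  + by congr inr; apply: eq_exist.
- move=> g x /=; case: pselect => p; case: pselect => q.
  + by congr inl; apply: eq_exist.
  + by case: q; rewrite -(gactK g x); apply: hP.
  + by case: p; apply: hP.
  + by congr inr; apply: eq_exist.
Qed.
End Iso.

Lemma sz_image_le (T U : choiceType) (f : T -> U) (A : set T) :
  finite_set A -> (sz (f @` A) <= sz A)%N.
Proof. by move=> fA; rewrite /sz fset_set_image // leq_imfset_card. Qed.

Lemma sz_proper (T : choiceType) (A B : set T) x :
  finite_set B -> A `<=` B -> B x -> ~ A x -> (sz A < sz B)%N.
Proof.
move=> fB AB Bx nAx; rewrite ltnNge; apply/negP => le.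
by apply: nAx; rewrite (sz_sub_eq fB AB le).
Qed.

Lemma nat_finite_max (Z : set nat) : finite_set Z -> (exists n, Z n) ->
  exists2 m, Z m & forall n, Z n -> (n <= m)%N.
Proof.
move=> fZ ex.
pose B := (\sum_(k <- fset_set Z) k)%N.
have ub : forall i, `[< Z i >] -> (i <= B)%N.
  move=> i /asboolP Zi; rewrite /B (big_rem i) /=; first by rewrite leq_addr.
  by rewrite in_fset_set // inE.
have exP : exists i, `[< Z i >] by case: ex => n Zn; exists n; apply/asboolP.
case: (ex_maxnP exP ub) => m /asboolP Zm mx; exists m => // n Zn.
by apply: mx; apply/asboolP.
Qed.

Section Classify.
Variable G : group.
Local Notation "x ⋆ y" := (@gmul G x y) (at level 40, left associativity).
Local Notation gi := (@ginv G).
Local Notation e := (@gone G).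

Definition orbset (S : gset G) : set (set S) := [set O | exists s : S, O = Defs.orbit s].
Definition norb (S : gset G) : nat := sz (@orbset S).

Lemma stab_sub (S : gset G) (P : set S) (hP : ginvariant P) (z : gsub hP) :
  stab z = stab (sval z).
Proof.
rewrite /stab; apply/seteqP; split=> g /=.
  by move/(congr1 sval).
by case: z => s p /= h; apply: eq_exist.
Qed.

Lemma proper_sub (S : gset G) (P : set S) (hP : ginvariant P) :
  proper_gset S -> proper_gset (gsub hP).
Proof. by move=> pS z; rewrite stab_sub. Qed.

Lemma orbit_sub (S : gset G) (P : set S) (hP : ginvariant P) (z : gsub hP) :
  Defs.orbit z = sval @^-1` Defs.orbit (sval z).
Proof.
rewrite /Defs.orbit; apply/seteqP; split=> w /=.
  by case=> g _ <-; exists g.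
case=> g _ E; exists g => //; case: z E => s p; case: w => t q /= E.
by apply: eq_exist.
Qed.

Lemma orbset_sub (S : gset G) (P : set S) (hP : ginvariant P) :
  @orbset (gsub hP) `<=` (fun O => sval @^-1` O) @` (@orbset S `&` [set O | exists s, P s /\ O = Defs.orbit s]).
Proof.
move=> _ [z ->]; exists (Defs.orbit (sval z)); last by rewrite orbit_sub.
by split; [exists (sval z)|exists (sval z); split => //; exact: svalP].
Qed.

Lemma cocompact_sub (S : gset G) (P : set S) (hP : ginvariant P) :
  cocompact_gset S -> cocompact_gset (gsub hP).
Proof.
move=> cS; apply: (sub_finite_set (@orbset_sub _ _ hP)).
by apply: finite_image; apply: finite_setIl.
Qed.

Lemma norb_sub_le (S : gset G) (P : set S) (hP : ginvariant P) :
  cocompact_gset S -> (norb (gsub hP) <= norb S)%N.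
Proof.
move=> cS; rewrite /norb.
apply: leq_trans (sz_sub _ (@orbset_sub _ _ hP)) _.
  by apply: finite_image; apply: finite_setIl.
apply: leq_trans (sz_image_le _ _) _; first exact: finite_setIl.
by apply: sz_sub => // O [].
Qed.

Lemma orbit_invariant (S : gset G) (x : S) : ginvariant (Defs.orbit x).
Proof. by move=> g s [h _ <-]; exists (g ⋆ h) => //; rewrite gactM. Qed.

Lemma norb_compl_lt (S : gset G) (x : S) :
  cocompact_gset S -> (norb (gsub (ginvariantC (@orbit_invariant S x))) < norb S)%N.
Proof.
move=> cS; rewrite /norb.
apply: leq_ltn_trans (sz_sub _ (@orbset_sub _ _ _)) _.
  by apply: finite_image; apply: finite_setIl.
apply: leq_ltn_trans (sz_image_le _ _) _; first exact: finite_setIl.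
apply: (sz_proper (x := Defs.orbit x)).
- exact: cS.
- by move=> O [].
- by exists x.
- case=> _ [s [ns E]]; apply: ns; rewrite E; exists e => //; exact: gact1.
Qed.

Lemma finW (S : gset G) K : proper_gset S -> cocompact_gset S -> finite_set (@W_orbits G S K).
Proof. by move=> pS cS; apply: finite_W_orbits. Qed.


Lemma sval_inj_sub (S : gset G) (P : set S) (hP : ginvariant P) (z w : gsub hP) :
  sval z = sval w -> z = w.
Proof. by case: z => s p; case: w => t q /= E; apply: eq_exist. Qed.

Lemma stab_wd (S T : gset G) (x : S) (y : T) g h :
  stab x = stab y -> gact g x = gact h x -> gact g y = gact h y.
Proof.
move=> sxy E.
have : stab x (gi h ⋆ g) by rewrite /stab /= gactM E gactK.
rewrite sxy /stab /= gactM => E'.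
by rewrite -{2}E' gactKV.
Qed.

Definition omap (S T : gset G) (x : S) (y : T)
  (z : gsub (@orbit_invariant S x)) : gsub (@orbit_invariant T y) :=
  exist _ (gact (s2val (cid2 (svalP z))) y) (ex_intro2 _ _ (s2val (cid2 (svalP z))) I erefl).

Lemma omapE (S T : gset G) (x : S) (y : T) z g :
  stab x = stab y -> gact g x = sval z -> sval (@omap S T x y z) = gact g y.
Proof.
move=> sxy E; rewrite /omap /=; case: cid2 => h _ /= Eh.
by apply: stab_wd sxy _; rewrite Eh E.
Qed.

Lemma orbit_iso (S T : gset G) (x : S) (y : T) : stab x = stab y ->
  gset_iso (gsub (@orbit_invariant S x)) (gsub (@orbit_invariant T y)).
Proof.
move=> sxy; have syx : stab y = stab x by [].
exists (@omap S T x y), (@omap T S y x); split; [|split].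
- move=> z; apply: sval_inj_sub.
  case: (svalP z) => g _ Eg.
  have E1 := omapE sxy Eg.
  by rewrite (omapE syx (esym E1)).
- move=> z; apply: sval_inj_sub.
  case: (svalP z) => g _ Eg.
  have E1 := omapE syx Eg.
  by rewrite (omapE sxy (esym E1)).
- move=> h z; apply: sval_inj_sub.
  case: (svalP z) => g _ Eg.
  have E2 : gact (h ⋆ g) x = sval (gact h z) by rewrite gactM Eg.
  rewrite (omapE sxy E2) gactM; congr gact; exact: (esym (omapE sxy Eg)).
Qed.

Lemma orbit_image (S X : gset G) (i : S -> X) :
  (forall g s, i (gact g s) = gact g (i s)) ->
  forall s, Defs.orbit (i s) = i @` Defs.orbit s.
Proof.
move=> ieq s; rewrite /Defs.orbit; apply/seteqP; split=> y /=.
  by case=> g _ <-; exists (gact g s); [exists g|rewrite ieq].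
by case=> _ [g _ <-] <-; exists g => //; rewrite ieq.
Qed.

Lemma proper_iso (S T : gset G) : gset_iso S T -> proper_gset S -> proper_gset T.
Proof.
case=> f [f' [fK [f'K feq]]] pS t.
have finj : injective f by exact: can_inj fK.
by rewrite -(f'K t) (stab_image feq finj).
Qed.

Lemma cocompact_iso (S T : gset G) : gset_iso S T -> cocompact_gset S -> cocompact_gset T.
Proof.
case=> f [f' [fK [f'K feq]]] cS.
apply: (sub_finite_set _ (finite_image (fun O => f @` O) cS)).
move=> _ [t ->]; exists (Defs.orbit (f' t)); first by exists (f' t).
by rewrite -orbit_image // f'K.
Qed.

Lemma proper_gsum (S T : gset G) : proper_gset S -> proper_gset T -> proper_gset (gsum S T).
Proof.
have il g (s : S) : @inl S T (gact g s) = @gact G (gsum S T) g (inl s) by [].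
have ir g (t : T) : @inr S T (gact g t) = @gact G (gsum S T) g (inr t) by [].
have iil : injective (@inl S T) by move=> ? ? [].
have iir : injective (@inr S T) by move=> ? ? [].
move=> pS pT [s|t].
  by rewrite (@stab_image G S (gsum S T) inl il iil).
by rewrite (@stab_image G T (gsum S T) inr ir iir).
Qed.

Lemma cocompact_gsum (S T : gset G) :
  cocompact_gset S -> cocompact_gset T -> cocompact_gset (gsum S T).
Proof.
have il g (s : S) : @inl S T (gact g s) = @gact G (gsum S T) g (inl s) by [].
have ir g (t : T) : @inr S T (gact g t) = @gact G (gsum S T) g (inr t) by [].
move=> cS cT.
have fU : finite_set ((fun O => (@inl S T) @` O) @` [set O | exists s, O = Defs.orbit s] `|`
                      (fun O => (@inr S T) @` O) @` [set O | exists s, O = Defs.orbit s]).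
  by rewrite finite_setU; split; apply: finite_image.
apply: (sub_finite_set _ fU).
move=> _ [[s|t] ->].
  by left; exists (Defs.orbit s); [exists s|rewrite (@orbit_image S (gsum S T) inl il)].
by right; exists (Defs.orbit t); [exists t|rewrite (@orbit_image T (gsum S T) inr ir)].
Qed.

Lemma proper_gscale n (S : gset G) : proper_gset S -> proper_gset (gscale n S).
Proof.
move=> pS; elim: n => [|n IH]; first by move=> [s []].
exact: (proper_iso (iso_sym (gscaleS_iso n S)) (proper_gsum IH pS)).
Qed.

Lemma cocompact_gscale n (S : gset G) : cocompact_gset S -> cocompact_gset (gscale n S).
Proof.
move=> cS; elim: n => [|n IH].
  by apply: (sub_finite_set _ (@finite_set0 (set (gscale 0 S)))) => O [[s []]].
exact: (cocompact_iso (iso_sym (gscaleS_iso n S)) (cocompact_gsum IH cS)).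
Qed.

Lemma gsz_stab_act (S : gset G) (s : S) g : finite_set (stab s) ->
  gsz (stab (gact g s)) = gsz (stab s).
Proof. by move=> fs; rewrite stab_act gsz_conjs. Qed.

Lemma exists_max_stab (S : gset G) (s0 : S) : proper_gset S -> cocompact_gset S ->
  exists s : S, forall t : S, (gsz (stab t) <= gsz (stab s))%N.
Proof.
move=> pS cS.
pose osz (O : set S) := xget 0%N [set n | exists2 t, O t & n = gsz (stab t)].
have oszE t : osz (Defs.orbit t) = gsz (stab t).
  apply: xget_unique; first by exists t => //; exists e => //; exact: gact1.
  by move=> n [t' [g _ <-] ->]; rewrite gsz_stab_act.
have fZ : finite_set [set n | exists t : S, n = gsz (stab t)].
  apply: (sub_finite_set _ (finite_image osz cS)).
  by move=> n [t ->]; exists (Defs.orbit t); [exists t|rewrite oszE].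
have [m [s ->] mx] := nat_finite_max fZ (ex_intro _ _ (ex_intro _ s0 erefl)).
by exists s => t; apply: mx; exists t.
Qed.

Definition chars_eq (X Y : gset G) := forall C, is_conj_class C ->
  chK (class_rep C) X = chK (class_rep C) Y.

Lemma class_rep_conj (K0 : set G) : exists g, class_rep (conj_class_of K0) = conjs g K0.
Proof.
have : conj_class_of K0 (class_rep (conj_class_of K0)).
  by apply: xgetPex; exists K0; exists e => //; exact: conjs1.
by case=> g _ <-; exists g.
Qed.

Lemma stab_inl (X Y : gset G) (x : X) : stab (@inl X Y x : gsum X Y) = stab x.
Proof.
have il g (s : X) : @inl X Y (gact g s) = @gact G (gsum X Y) g (inl s) by [].
have iil : injective (@inl X Y) by move=> ? ? [].
exact: (@stab_image G X (gsum X Y) inl il iil).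
Qed.
Lemma stab_inr (X Y : gset G) (y : Y) : stab (@inr X Y y : gsum X Y) = stab y.
Proof.
have ir g (s : Y) : @inr X Y (gact g s) = @gact G (gsum X Y) g (inr s) by [].
have iir : injective (@inr X Y) by move=> ? ? [].
exact: (@stab_image G Y (gsum X Y) inr ir iir).
Qed.

Lemma chK_split (X : gset G) (P : set X) (hP : ginvariant P) K :
  proper_gset X -> cocompact_gset X ->
  chK K X = (chK K (gsub hP) + chK K (gsub (ginvariantC hP)))%R.
Proof.
move=> pX cX; rewrite (chK_iso K (gsub_split hP)) chK_gsum //.
  by apply: finW; [exact: proper_sub|exact: cocompact_sub].
by apply: finW; [exact: proper_sub|exact: cocompact_sub].
Qed.

Lemma classify_step (X Y : gset G) (x : X) :
  proper_gset X -> cocompact_gset X -> proper_gset Y -> cocompact_gset Y ->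
  chars_eq X Y ->
  (forall s : X, (gsz (stab s) <= gsz (stab x))%N) ->
  (forall t : Y, (gsz (stab t) <= gsz (stab x))%N) ->
  (forall X' Y' : gset G, proper_gset X' -> cocompact_gset X' ->
     proper_gset Y' -> cocompact_gset Y' ->
     (norb X' + norb Y' < norb X + norb Y)%N -> chars_eq X' Y' -> gset_iso X' Y') ->
  gset_iso X Y.
Proof.
move=> pX cX pY cY ch mX mY IH.
have [g Eg] := class_rep_conj (stab x).
set K := class_rep _ in Eg.
have cC : is_conj_class (conj_class_of (stab x)).
  by exists (stab x) => //; split; [exact: stab_subgroup|exact: pX].
pose x1 := gact g x.
have sx1 : stab x1 = K by rewrite Eg stab_act.
have fx1 : @fixpts G X K x1 by rewrite /fixpts -sx1.
have gtX := chK_gt0 pX (finW K pX cX) fx1.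
have gtY : (0 < chK K Y)%R by move: gtX; rewrite /K (ch _ cC).
have [y fy] : exists y : Y, @fixpts G Y K y.
  apply: contrapT => ny.
  have : chK K Y = 0%R by apply: chK_nofix => y fy; apply: ny; exists y.
  by move=> h; move: gtY; rewrite h ltxx.
have hK : gsz K = gsz (stab x) by rewrite Eg gsz_conjs //; exact: pX.
have sy : K = stab y.
  apply: (@sz_sub_eq {classic G}); first exact: (pY y); first exact: fy.
  exact: (leq_trans (mY y) (eq_leq (esym hK))).
have sxy : stab x1 = stab y by rewrite sx1.
pose Px := @orbit_invariant X x1; pose Py := @orbit_invariant Y y.
have isoO := orbit_iso sxy.
have ch' : chars_eq (gsub (ginvariantC Px)) (gsub (ginvariantC Py)).
  move=> C hC; have := ch C hC.
  rewrite (chK_split Px) // (chK_split Py) // (chK_iso _ isoO).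
  by move/addrI.
have lt : (norb (gsub (ginvariantC Px)) + norb (gsub (ginvariantC Py)) < norb X + norb Y)%N.
  apply: leq_trans (leq_add (norb_compl_lt x1 cX) (norb_sub_le (ginvariantC Py) cY)) _.
  by [].

have iso' := IH _ _ (proper_sub (hP:=ginvariantC Px) pX) (cocompact_sub (ginvariantC Px) cX) (proper_sub (hP:=ginvariantC Py) pY) (cocompact_sub (ginvariantC Py) cY) lt ch'.
apply: iso_trans (gsub_split Px) _.
apply: iso_trans (iso_sym (gsub_split Py)).
exact: iso_sum.
Qed.

Lemma chars_eq_sym (X Y : gset G) : chars_eq X Y -> chars_eq Y X.
Proof. by move=> h C hC; rewrite h. Qed.

Lemma classify_aux n : forall X Y : gset G,
  proper_gset X -> cocompact_gset X -> proper_gset Y -> cocompact_gset Y ->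
  (norb X + norb Y < n)%N -> chars_eq X Y -> gset_iso X Y.
Proof.
elim: n => [//|n IHn] X Y pX cX pY cY lt ch.
have IH : forall X' Y' : gset G, proper_gset X' -> cocompact_gset X' ->
     proper_gset Y' -> cocompact_gset Y' ->
     (norb X' + norb Y' < norb X + norb Y)%N -> chars_eq X' Y' -> gset_iso X' Y'.
  move=> X' Y' pX' cX' pY' cY' lt' ch'; apply: IHn => //.
  exact: leq_trans lt' lt.
have IH' : forall X' Y' : gset G, proper_gset X' -> cocompact_gset X' ->
     proper_gset Y' -> cocompact_gset Y' ->
     (norb X' + norb Y' < norb Y + norb X)%N -> chars_eq X' Y' -> gset_iso X' Y'.
  move=> X' Y' pX' cX' pY' cY' lt' ch'; apply: IH => //; by rewrite [(norb X + _)%N]addnC.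
case: (pselect (exists w : gsum X Y, True)) => [[w _]|nw].
  have [m mx] := exists_max_stab w (proper_gsum pX pY) (cocompact_gsum cX cY).
  case: m mx => [x|y] mx.
    apply: (@classify_step X Y x pX cX pY cY ch _ _ IH).
      by move=> s; have := mx (inl s); rewrite !stab_inl.
    by move=> t; have := mx (inr t); rewrite stab_inl stab_inr.
  apply: iso_sym; apply: (@classify_step Y X y pY cY pX cX (chars_eq_sym ch) _ _ IH').
    by move=> s; have := mx (inr s); rewrite !stab_inr.
  by move=> t; have := mx (inl t); rewrite stab_inl stab_inr.
exists (fun x => False_rect _ (nw (ex_intro _ (inl x) I))).
exists (fun y => False_rect _ (nw (ex_intro _ (inr y) I))).
split; [|split].
- by move=> x; case: (nw (ex_intro _ (inl x) I)).
- by move=> y; case: (nw (ex_intro _ (inr y) I)).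
- by move=> g x; case: (nw (ex_intro _ (inl x) I)).
Qed.

Lemma classify (X Y : gset G) :
  proper_gset X -> cocompact_gset X -> proper_gset Y -> cocompact_gset Y ->
  chars_eq X Y -> gset_iso X Y.
Proof. by move=> pX cX pY cY; apply: (@classify_aux (norb X + norb Y).+1). Qed.
End Classify.

Section Quot.
Variable G : group.
Local Notation "x ⋆ y" := (@gmul G x y) (at level 40, left associativity).
Local Notation gi := (@ginv G).
Local Notation e := (@gone G).
Variable H : set G.
Hypothesis sH : is_subgroup H.

Lemma lcoset_img g g' : gmul g @` lcoset g' H = lcoset (g ⋆ g') H.
Proof.
rewrite /lcoset; apply/seteqP; split=> x /=.
  by case=> _ [k Hk <-] <-; exists k => //; rewrite gmulA.
by case=> k Hk <-; exists (g' ⋆ k); [exists k|rewrite gmulA].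
Qed.

Definition qcar : Type := {A : set G | exists g, A = lcoset g H}.

Lemma qact_ok g (A : qcar) : exists g'', gmul g @` sval A = lcoset g'' H.
Proof. by case: A => A [g' E] /=; exists (g ⋆ g'); rewrite E lcoset_img. Qed.

Definition qact g (A : qcar) : qcar := exist _ (gmul g @` sval A) (qact_ok g A).

Definition quot : gset G.
refine (@GSet G qcar qact _ _).
- move=> [A p]; apply: eq_exist => /=.
  apply/seteqP; split=> x /=; first by case=> y Ay <-; rewrite gmul1x.
  by move=> Ax; exists x => //; rewrite gmul1x.
- move=> g h [A p]; apply: eq_exist => /=.
  apply/seteqP; split=> x /=.
    by case=> y Ay <-; exists (h ⋆ y); [exists y|rewrite gmulA].
  by case=> _ [y Ay <-] <-; exists y => //; rewrite gmulA.
Defined.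

Lemma H1 : H e. Proof. by case: sH. Qed.
Lemma HM x y : H x -> H y -> H (x ⋆ y). Proof. by case: sH => _ [hM _]; apply: hM. Qed.
Lemma HV x : H x -> H (gi x). Proof. by case: sH => _ [_ hV]; apply: hV. Qed.

Lemma lcoset_eq g h : lcoset g H = lcoset h H <-> H (gi h ⋆ g).
Proof.
split=> [E|Hk].
  have : lcoset h H g by rewrite -E; exists e; [exact: H1|exact: gmulx1].
  by case=> k Hk <-; rewrite gmulA gmulVx gmul1x.
rewrite /lcoset; apply/seteqP; split=> x /=.
  case=> k Hk' <-; exists (gi h ⋆ g ⋆ k); first exact: HM.
  by rewrite !gmulA gmulxV gmul1x.
case=> k Hk' <-; exists (gi (gi h ⋆ g) ⋆ k); first by apply: HM => //; apply: HV.
by rewrite invM invK !gmulA gmulxV gmul1x.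
Qed.

Definition coset (g : G) : quot := exist _ (lcoset g H) (ex_intro _ g erefl).

Lemma coset_act a g : gact a (coset g) = coset (a ⋆ g).
Proof. by apply: eq_exist; rewrite /= lcoset_img. Qed.

Lemma quot_coset (c : quot) : exists g, c = coset g.
Proof. by case: c => A [g E]; exists g; apply: eq_exist. Qed.

Lemma stab_coset g : stab (coset g) = conjs g H.
Proof.
rewrite /stab; apply/seteqP; split=> a; rewrite /mkset.
  rewrite coset_act => /(congr1 sval) /= /lcoset_eq Hk.
  exists (gi g ⋆ (a ⋆ g)) => //.
  by rewrite !gmulA gmulxV gmul1x mulgK.
case=> k Hk <-; rewrite coset_act; apply: eq_exist; apply/lcoset_eq.
by rewrite -!gmulA gmulVx gmulx1 mulKg.
Qed.

Hypothesis fH : finite_set H.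

Lemma proper_quot : proper_gset quot.
Proof.
move=> c; have [g ->] := quot_coset c.
by rewrite stab_coset; exact: finite_conjs.
Qed.

Lemma cocompact_quot : cocompact_gset quot.
Proof.
apply: (sub_finite_set _ (finite_set1 (Defs.orbit (coset e)))).
move=> _ [c ->]; have [g ->] := quot_coset c.
by rewrite /= -(gmulx1 g) -coset_act orbit_act.
Qed.
End Quot.

Lemma rat_repr (x : rat) : exists (z m : nat),
  x = (z%:R / m.+1%:R)%R \/ x = (- (z%:R / m.+1%:R))%R.
Proof.
rewrite -(divq_num_den x).
have := denq_gt0 x; case: (denq x) => [[|m]|d] // _.
case: (numq x) => [z|z].
  by exists z, m; left.
exists z.+1, m; right; rewrite NegzE.
by rewrite GRing.mulNr.
Qed.

Section Surj.
Variable G : group.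
Local Notation "x ⋆ y" := (@gmul G x y) (at level 40, left associativity).
Local Notation gi := (@ginv G).
Local Notation e := (@gone G).

Definition pc_sum (P Q : pcgset G) : pcgset G :=
  PCGSet (proper_gsum (@pc_proper G P) (@pc_proper G Q)) (cocompact_gsum (@pc_cocompact G P) (@pc_cocompact G Q)).
Definition pc_scale n (P : pcgset G) : pcgset G :=
  PCGSet (@proper_gscale G n P (@pc_proper G P)) (@cocompact_gscale G n P (@pc_cocompact G P)).

Lemma finWpc K (P : pcgset G) : finite_set (@W_orbits G P K).
Proof. exact: finW (@pc_proper G P) (@pc_cocompact G P). Qed.

Lemma chK_pcsum K (P Q : pcgset G) : chK K (pc_sum P Q) = (chK K P + chK K Q)%R.
Proof. by rewrite /= chK_gsum //; apply: finWpc. Qed.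
Lemma chK_pcscale K n (P : pcgset G) : chK K (pc_scale n P) = (n%:R * chK K P)%R.
Proof. by rewrite /= chK_gscale //; apply: finWpc. Qed.

Local Open Scope ring_scope.

Lemma chQ_K_mk K (P N : pcgset G) d :
  chQ_K K (MkAQ P N d) = (chK K P - chK K N) / d.+1%:R.
Proof. by []. Qed.

Lemma aq_add (a : AQ G) (x : rat) (Q : pcgset G) : exists a' : AQ G,
  forall K, chQ_K K a' = chQ_K K a + x * chK K Q.
Proof.
have hd m : ((aq_den a).+1 * m.+1).-1.+1 = ((aq_den a).+1 * m.+1)%N.
  by rewrite prednK // muln_gt0.
have h1 : ((aq_den a).+1%:R : rat) != 0 by rewrite pnatr_eq0.
have [z [m [->|->]]] := rat_repr x.
  exists (MkAQ (pc_sum (pc_scale m.+1 (aq_pos a)) (pc_scale ((aq_den a).+1 * z) Q))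
               (pc_scale m.+1 (aq_neg a)) ((aq_den a).+1 * m.+1).-1) => K.
  rewrite chQ_K_mk hd chK_pcsum !chK_pcscale !natrM /chQ_K.
  have h2 : (m.+1%:R : rat) != 0 by rewrite pnatr_eq0.
  by field; rewrite !nat1r !pnatr_eq0.
exists (MkAQ (pc_scale m.+1 (aq_pos a))
             (pc_sum (pc_scale m.+1 (aq_neg a)) (pc_scale ((aq_den a).+1 * z) Q))
             ((aq_den a).+1 * m.+1).-1) => K.
rewrite chQ_K_mk hd chK_pcsum !chK_pcscale !natrM /chQ_K.
have h2 : (m.+1%:R : rat) != 0 by rewrite pnatr_eq0.
by field; rewrite !nat1r !pnatr_eq0.
Qed.

Local Close Scope ring_scope.
Lemma subgroup_conjs (g : G) (K : set G) : is_subgroup K -> is_subgroup (conjs g K).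
Proof.
case=> K1 [KM KV]; split; last split.
- by exists e => //; rewrite gmulx1 gmulxV.
- move=> _ _ [a Ka <-] [b Kb <-]; exists (a ⋆ b); first exact: KM.
  by rewrite !gmulA mulgKV.
- move=> _ [a Ka <-]; exists (gi a); first exact: KV.
  by rewrite !invM invK gmulA.
Qed.

Lemma rep_spec (C : set (set G)) : is_conj_class C ->
  exists K0 : set G, [/\ fin_subgroup K0, C = conj_class_of K0 & exists g, class_rep C = conjs g K0].

Proof.
case=> K0 fK0 ->; exists K0; split => //.
exact: class_rep_conj.
Qed.

Lemma fin_rep (C : set (set G)) : is_conj_class C -> fin_subgroup (class_rep C).
Proof.
move=> /rep_spec [K0 [[sK fK] _ [g ->]]]; split.
  exact: subgroup_conjs.
exact: finite_conjs.
Qed.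

Lemma rep_class (C : set (set G)) : is_conj_class C -> conj_class_of (class_rep C) = C.
Proof. by move=> /rep_spec [K0 [_ -> [g ->]]]; rewrite conj_class_conjs. Qed.

Local Open Scope ring_scope.
Lemma quot_nonzero (K H : set G) (sH : is_subgroup H) (fH : finite_set H) :
  finite_set K -> (gsz H <= gsz K)%N -> chK K (quot H) != 0 -> exists g, K = conjs g H.
Proof.
move=> fK le nz; apply: contrapT => nex; move/eqP: nz; apply.
apply: chK_nofix => c fc; apply: nex.
have [g Eg] := quot_coset c; exists g.
have sub : K `<=` stab c by [].
rewrite Eg (stab_coset sH) in sub.
apply: (@sz_sub_eq {classic G}) => //; first exact: finite_conjs.
by have := gsz_conjs g fH; rewrite /gsz => ->.
Qed.

Lemma chK_quot_pos (H : set G) (sH : is_subgroup H) (fH : finite_set H) :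
  0 < chK H (quot H).
Proof.
apply: (@chK_gt0 _ _ _ (coset H e)).
- exact: proper_quot.
- apply: finW; [exact: proper_quot|exact: cocompact_quot].
- move=> k Hk; rewrite (coset_act H k e) gmulx1; apply: eq_exist; apply/lcoset_eq => //.
  by rewrite /= inv1 gmul1x.
Qed.

Definition emptyg : gset G.
refine (@GSet G False (fun _ x => x) _ _); by [].
Defined.
Lemma emptyg_pc : proper_gset emptyg /\ cocompact_gset emptyg.
Proof.
split; first by [].
by apply: (sub_finite_set _ (@finite_set0 (set emptyg))) => O [[]].
Qed.
Definition pc_empty : pcgset G := PCGSet (proj1 emptyg_pc) (proj2 emptyg_pc).

Lemma surj_aux (c : set (set G) -> rat) n : forall E : {fset set (set G)},
  (#|` E| < n)%N -> (forall C, C \in E -> is_conj_class C) ->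
  exists a : AQ G, forall C, C \in E -> chQ a C = c C.
Proof.
elim: n => [//|n IHn] E cE hE.
case: (pselect (exists D, D \in E)) => [exD|nD]; last first.
  exists (MkAQ pc_empty pc_empty 0) => C CE; case: nD; by exists C.
pose P k := `[< exists2 D, D \in E & gsz (class_rep D) = k >].
have exP : exists k, P k.
  by case: exD => D DE; exists (gsz (class_rep D)); apply/asboolP; exists D.
case: (ex_minnP exP) => k /asboolP [D DE Dk] kmin.
have hD := hE D DE.
have [sD fD] := fin_rep hD.
pose Q : pcgset G := PCGSet (proper_quot sD fD) (cocompact_quot (class_rep D)).
have [a ha] : exists a : AQ G, forall C, C \in (E `\ D)%fset -> chQ a C = c C.
  apply: IHn.
    by rewrite (cardfsD1 D) DE in cE; rewrite -ltnS; apply: leq_trans cE; rewrite add1n.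
  by move=> C; rewrite in_fsetD1 => /andP [_]; apply: hE.
have vpos := chK_quot_pos sD fD.
have [a' ha'] := aq_add a ((c D - chQ a D) / chK (class_rep D) Q) Q.
exists a' => C CE; rewrite /chQ ha'.
case: (eqVneq C D) => [->|CD].
  rewrite -/(chQ a D); field.
  by rewrite lt0r_neq0.
have CE' : C \in (E `\ D)%fset by rewrite in_fsetD1 CD.
rewrite -/(chQ a C) ha // (_ : chK (class_rep C) Q = 0) ?mulr0 ?addr0 //.
apply/eqP; apply: contraT => nz.
have [sC fC] := fin_rep (hE C CE).
have le : (gsz (class_rep D) <= gsz (class_rep C))%N.
  by rewrite Dk; apply: kmin; apply/asboolP; exists C.
have [g Eg] := quot_nonzero sD fD fC le nz.
case/eqP: CD; rewrite -(rep_class (hE C CE)) -(rep_class hD) Eg.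
by rewrite conj_class_conjs.
Qed.

Lemma surj (c : set (set G) -> rat) :
  finite_set [set C : set (set G) | is_conj_class C] ->
  exists a : AQ G, forall C, is_conj_class C -> chQ a C = c C.
Proof.
move=> fC.
have hE : forall C, C \in fset_set [set C : set (set G) | is_conj_class C] -> is_conj_class C.
  by move=> C; rewrite in_fset_set // inE.
have [a ha] := @surj_aux c (#|` fset_set [set C : set (set G) | is_conj_class C]|).+1 _ (ltnSn _) hE.
by exists a => C hC; apply: ha; rewrite in_fset_set // inE.
Qed.
End Surj.

Section Main.
Variable G : group.
Local Open Scope ring_scope.

Lemma chK_comb K m n (P N U : pcgset G) :
  chK K (gsum (gsum (gscale m P) (gscale n N)) U) =
  m%:R * chK K P + n%:R * chK K N + chK K U.
Proof.
have fP := finWpc K P; have fN := finWpc K N; have fU := finWpc K U.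
rewrite chK_gsum //; last by apply: finite_W_orbits_gsum; apply: finW_gscale.
rewrite chK_gsum; try by apply: finW_gscale.
by rewrite !chK_gscale.
Qed.

Lemma alg1 (k na nb pa ma pb mb u : rat) : k != 0 -> na != 0 -> nb != 0 ->
  k * nb * pa + k * na * mb + u = k * nb * ma + k * na * pb + u ->
  (pa - ma) / na = (pb - mb) / nb.
Proof.
move=> k0 na0 nb0 h.
have h' : k * (nb * (pa - ma) - na * (pb - mb)) = 0.
  move: h => /addIr h; rewrite !mulrBr; lra.
move/eqP: h'; rewrite mulf_eq0 (negPf k0) /= subr_eq0 => /eqP h2.
apply/eqP; rewrite eqr_div //; apply/eqP.
by rewrite mulrC h2 mulrC.
Qed.

Lemma alg2 (na nb pa ma pb mb : rat) : na != 0 -> nb != 0 ->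
  (pa - ma) / na = (pb - mb) / nb ->
  nb * pa + na * mb = nb * ma + na * pb.
Proof.
move=> na0 nb0 /eqP; rewrite eqr_div // => /eqP h.
apply/eqP; rewrite -subr_eq0; apply/eqP.
have -> : nb * pa + na * mb - (nb * ma + na * pb) = (pa - ma) * nb - (pb - mb) * na by ring.
by rewrite h subrr.
Qed.

Lemma chK_comb2 K m n (P N : pcgset G) :
  chK K (gsum (gscale m P) (gscale n N)) = m%:R * chK K P + n%:R * chK K N.
Proof.
have fP := finWpc K P; have fN := finWpc K N.
by rewrite chK_gsum ?chK_gscale //; apply: finW_gscale.
Qed.


Lemma part1 (a b : AQ G) : AQ_eq a b ->
     forall C, is_conj_class C -> chQ a C = chQ b C.
Proof.
have nz n : (n.+1%:R : rat) != 0 by rewrite pnatr_eq0.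
move=> [k k0 [U iso]] C hC.
have := chK_iso (class_rep C) iso.
rewrite !chK_comb !natrM /chQ /chQ_K.
apply: alg1 => //; rewrite pnatr_eq0; by rewrite -lt0n.
Qed.

Lemma part2 (a b : AQ G) :
  (forall C, is_conj_class C -> chQ a C = chQ b C) -> AQ_eq a b.
Proof.
have nz n : (n.+1%:R : rat) != 0 by rewrite pnatr_eq0.
move=> h.
pose X := gsum (gscale (aq_den b).+1 (aq_pos a)) (gscale (aq_den a).+1 (aq_neg b)).
pose Y := gsum (gscale (aq_den b).+1 (aq_neg a)) (gscale (aq_den a).+1 (aq_pos b)).
have pcX : proper_gset X /\ cocompact_gset X.
  split; [apply: proper_gsum|apply: cocompact_gsum];
    (apply: proper_gscale || apply: cocompact_gscale);
    (apply: pc_proper || apply: pc_cocompact).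
have pcY : proper_gset Y /\ cocompact_gset Y.
  split; [apply: proper_gsum|apply: cocompact_gsum];
    (apply: proper_gscale || apply: cocompact_gscale);
    (apply: pc_proper || apply: pc_cocompact).
have ch : chars_eq X Y.
  move=> C hC; rewrite !chK_comb2.
  by apply: alg2 => //; exact: h.
have iso := classify pcX.1 pcX.2 pcY.1 pcY.2 ch.
exists 1%N => //; exists (aq_pos a); rewrite !mul1n.
exact: iso_sum iso (iso_refl _).
Qed.
End Main.

Theorem lemma8p10 (G : group) :
  (* ch^Gamma (x) Q is well defined on A(Gamma) (x) Q ... *)
  (forall a b : AQ G, AQ_eq a b ->
     forall C, is_conj_class C -> chQ a C = chQ b C) /\
  (* ... injective ... *)
  (forall a b : AQ G,
     (forall C, is_conj_class C -> chQ a C = chQ b C) -> AQ_eq a b) /\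
  (* ... and bijective if there are finitely many conjugacy classes of finite subgroups *)
  (finite_set [set C : set (set G) | is_conj_class C] ->
     forall c : set (set G) -> rat,
       exists a : AQ G, forall C, is_conj_class C -> chQ a C = c C).
Proof.
split; first exact: part1.
split; first exact: part2.
by move=> fC c; apply: surj.
Qed.
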